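(* Let $\Sigma=(I,X,\mathcal U,\phi,Y,h)$ be a forward complete control system with outputs. If $\Sigma$ is OUAG and BORS, then $\Sigma$ is OUGB.
   Context: Let $I\in\{\mathbb N_0,\mathbb R_0^+\}$. A forward complete control system with outputs $\Sigma=(I,X,\mathcal U,\phi,Y,h)$ consists of: a normed space $(X,\|\cdot\|_X)$; a vector space $U$ and a normed linear subspace $(\mathcal U,\|\cdot\|_{\mathcal U})$ of $\{u:I\to U\}$ such that for all $u\in\mathcal U,\tau\in I$, $u(\cdot+\tau)\in\mathcal U$ with $\|u(\cdot+\tau)\|_{\mathcal U}\le\|u\|_{\mathcal U}$, and for $t_2\ge t_1\ge 0$ the function $u|_{[t_1,t_2]}$ ($u$ on $[t_1,t_2]$, $0$ elsewhere) lies in $\mathcal U$ with norm $\le\|u\|_{\mathcal U}$; a map $\phi:I\times X\times\mathcal U\to X$ with $\phi(0,x,u)=x$, causality, and cocycle property $\phi(t+s,x,u)=\phi(s,\phi(t,x,u),u(t+\cdot))$; a normed space $Y$ and $h:X\times U\to Y$. Write $y(t,x,u)=h(\phi(t,x,u),u(t))$, $B_r=\{x:\|x\|_X<r\}$, $B_{r,\mathcal U}=\{u:\|u\|_{\mathcal U}<r\}$; $\mathcal K_\infty$ = unbounded continuous strictly increasing functions $\mathbb R_0^+\to\mathbb R_0^+$ vanishing at $0$. OUAG: $\exists\gamma\in\mathcal K_\infty$ such that for all $\varepsilon,r,s>0$ there is $\tau\in I$ with $\|y(t,x,u)\|_Y\le\varepsilon+\gamma(\|u\|_{\mathcal U})$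 for all $x\in B_r,u\in B_{s,\mathcal U},t\ge\tau$. BORS: for all $C>0,\tau\in I$: $\sup\{\|y(t,x,u)\|_Y:\|x\|_X<C,\|u\|_{\mathcal U}<C,t\in I,t<\tau\}<\infty$. OUGB: $\exists\sigma,\gamma\in\mathcal K_\infty,c>0$ with $\|y(t,x,u)\|_Y\le\sigma(\|x\|_X)+\gamma(\|u\|_{\mathcal U})+c$ for all $x\in X,u\in\mathcal U,t\in I$. *)

(* Defs.v *)
From HB Require Import structures.
From mathcomp Require Import all_boot all_order all_algebra.
From mathcomp Require Import all_classical all_reals all_analysis.
Set Implicit Arguments. Unset Strict Implicit. Unset Printing Implicit Defensive.
Import Order.TTheory GRing.Theory Num.Theory.
Import numFieldNormedType.Exports.
Local Open Scope classical_set_scope.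
Local Open Scope ring_scope.

(* Time domain I: discrete (I = N_0, embedded in R) or continuous (I = R_0^+). *)
Definition inI {R : realType} (disc : bool) (t : R) : Prop :=
  if disc then exists n : nat, t = n%:R else 0 <= t.

(* Inputs u : I -> U are represented as functions R -> U vanishing outside I. *)
Definition shift {R : realType} {U : lmodType R} (disc : bool)
  (u : R -> U) (tau : R) : R -> U :=
  fun t => if `[< inI disc t >] then u (t + tau) else 0.

Definition restr {R : realType} {U : lmodType R}
  (u : R -> U) (t1 t2 : R) : R -> U :=
  fun t => if (t1 <= t) && (t <= t2) then u t else 0.

Record CSys (R : realType) (X : normedModType R) (U : lmodType R)
    (Y : normedModType R) := {
  disc : bool;
  Uin : set (R -> U);
  Unorm : (R -> U) -> R;
  phi : R -> X -> (R -> U) -> X;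
  h : X -> U -> Y;
  Uin_supp : forall u, Uin u -> forall t, ~ inI disc t -> u t = 0;
  Uin_zero : Uin (fun _ => 0);
  Uin_add : forall u v, Uin u -> Uin v -> Uin (fun t => u t + v t);
  Uin_scale : forall (a : R) u, Uin u -> Uin (fun t => a *: u t);
  Unorm_ge0 : forall u, Uin u -> 0 <= Unorm u;
  Unorm_eq0 : forall u, Uin u -> Unorm u = 0 -> u = (fun _ => 0);
  Unorm_scale : forall (a : R) u, Uin u -> Unorm (fun t => a *: u t) = `|a| * Unorm u;
  Unorm_triangle : forall u v, Uin u -> Uin v ->
    Unorm (fun t => u t + v t) <= Unorm u + Unorm v;
  Uin_shift : forall u tau, Uin u -> inI disc tau ->
    Uin (shift disc u tau) /\ Unorm (shift disc u tau) <= Unorm u;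
  Uin_restr : forall u t1 t2, Uin u -> 0 <= t1 -> t1 <= t2 ->
    Uin (restr u t1 t2) /\ Unorm (restr u t1 t2) <= Unorm u;
  phi_0 : forall x u, Uin u -> phi 0 x u = x;
  phi_causal : forall t x u v, inI disc t -> Uin u -> Uin v ->
    (forall s, 0 <= s -> s <= t -> u s = v s) -> phi t x u = phi t x v;
  phi_cocycle : forall t s x u, inI disc t -> inI disc s -> Uin u ->
    phi (t + s) x u = phi s (phi t x u) (shift disc u t)
}.

Section Props.
Context {R : realType} {X : normedModType R} {U : lmodType R}
  {Y : normedModType R} (S : CSys X U Y).

Definition yout (t : R) (x : X) (u : R -> U) : Y := h S (phi S t x u) (u t).

Definition Kinf (f : R -> R) : Prop :=
  f 0 = 0 /\ {within `[0, +oo[, continuous f} /\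
  (forall a b, 0 <= a -> a < b -> f a < f b) /\
  (forall M, exists r, 0 <= r /\ M < f r).

Definition OUAG : Prop :=
  exists gamma, Kinf gamma /\
    forall eps r s, 0 < eps -> 0 < r -> 0 < s ->
      exists tau, inI (disc S) tau /\
        forall x u t, `|x| < r -> Uin S u -> Unorm S u < s ->
          inI (disc S) t -> tau <= t ->
          `|yout t x u| <= eps + gamma (Unorm S u).

(* sup{...} < oo  is written as: the set of values is bounded above *)
Definition BORS : Prop :=
  forall C tau, 0 < C -> inI (disc S) tau ->
    exists M : R, forall x u t, `|x| < C -> Uin S u -> Unorm S u < C ->
      inI (disc S) t -> t < tau -> `|yout t x u| <= M.

Definition OUGB : Prop :=
  exists sigma gamma (c : R), Kinf sigma /\ Kinf gamma /\ 0 < c /\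
    forall x u t, Uin S u -> inI (disc S) t ->
      `|yout t x u| <= sigma `|x| + gamma (Unorm S u) + c.

End Props.

(* Main.v *)
Require Import Defs.
From HB Require Import structures.
From mathcomp Require Import all_boot all_order all_algebra.
From mathcomp Require Import all_classical all_reals all_analysis.
From mathcomp Require Import lra.
Set Implicit Arguments. Unset Strict Implicit. Unset Printing Implicit Defensive.
Import Order.TTheory GRing.Theory Num.Theory.
Import numFieldNormedType.Exports.
Local Open Scope classical_set_scope.
Local Open Scope ring_scope.

Section G.
Variable R : realType.
Variable c : nat -> R.
Hypothesis c0 : forall k, 0 <= c k.

Definition g (N : nat) (m : R) : R := m + \sum_(0 <= k < N) c k * Num.max 0 (m - k%:R).

Lemma gS N m : m <= N%:R -> g N.+1 m = g N m.
Proof.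
move=> mN; rewrite /g big_nat_recr //=.
have -> : Num.max 0 (m - N%:R) = 0 by apply/max_idPl; rewrite subr_le0.
by rewrite mulr0 addr0.
Qed.

Lemma gD N d m : m <= N%:R -> g (N + d) m = g N m.
Proof.
move=> mN; elim: d => [|d IH]; first by rewrite addn0.
rewrite addnS gS // (le_trans mN) // ler_nat; exact: leq_addr.
Qed.

Lemma gE N1 N2 m : m <= N1%:R -> m <= N2%:R -> g N1 m = g N2 m.
Proof.
wlog h : N1 N2 / (N1 <= N2)%N.
  move=> W h1 h2; case: (leqP N1 N2) => H; first exact: W.
  by symmetry; apply: W => //; exact: ltnW.
move=> h1 _; by rewrite -(subnKC h) gD.
Qed.

Lemma sum_cont N : continuous (fun m : R => \sum_(0 <= k < N) c k * Num.max 0 (m - k%:R)).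
Proof.
elim: N => [|N IH].
  have -> : (fun m : R => \sum_(0 <= k < 0) c k * Num.max 0 (m - k%:R)) = fun=> 0.
    by apply/funext => m; rewrite big_geq.
  move=> x; exact: cvg_cst.
have -> : (fun m : R => \sum_(0 <= k < N.+1) c k * Num.max 0 (m - k%:R)) =
  (fun m => \sum_(0 <= k < N) c k * Num.max 0 (m - k%:R)) + (fun m => c N * Num.max 0 (m - N%:R)).
  by apply/funext => m; rewrite big_nat_recr.
move=> x; apply: continuousD; first exact: IH.
apply: cvgM; first exact: cvg_cst.
apply: (@continuous_max R R (fun=> 0) (fun y : R => y - N%:R) x); first exact: cvg_cst.
apply: continuousB; [exact: cvg_id|exact: cvg_cst].
Qed.

Lemma g_cont N : continuous (g N).
Proof.
move=> x; apply: (@continuousD _ _ _ id); first exact: cvg_id.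
exact: sum_cont.
Qed.

Definition xi (m : R) := g (Num.truncn m).+1 m.

Lemma xiE N m : m <= N%:R -> xi m = g N m.
Proof. move=> h; apply: gE => //; exact: ltW (Num.Theory.truncnS_gt m). Qed.

Lemma xi_cont : continuous xi.
Proof.
move=> m0.
have Ht := Num.Theory.truncnS_gt m0.
have E : ((Num.truncn m0).+2%:R : R) = (Num.truncn m0).+1%:R + 1 by rewrite -addn1 natrD.
have H : \forall m \near m0, g (Num.truncn m0).+2 m = xi m.
  near=> m; symmetry; apply: xiE.
  have : `|m0 - m| < 1 by near: m; exact: (nbhsx_ballx m0 1).
  rewrite E ltr_norml => /andP[h1 h2]. apply/ltW. 
  by rewrite -(subrK m0 m) addrC ltrD // -opprB ltrNl.
apply: cvg_trans (near_eq_cvg H) _.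
rewrite (@xiE (Num.truncn m0).+2); first exact: g_cont.
by rewrite E ltW // ltr_wpDr.
Unshelve. all: end_near.
Qed.

Lemma max0 (x : R) : 0 <= Num.max 0 x.
Proof. by rewrite le_max lexx. Qed.

Lemma sum_ge0 N m : 0 <= \sum_(0 <= k < N) c k * Num.max 0 (m - k%:R).
Proof. apply: sumr_ge0 => k _; apply: mulr_ge0 => //; exact: max0. Qed.

Lemma g_lt N a b : a < b -> g N a < g N b.
Proof.
move=> ab; rewrite /g ltr_leD // ler_sum // => k _.
apply: ler_wpM2l => //; apply: le_max2 => //.
by rewrite lerD // ltW.
Qed.

Lemma xi_lt a b : a < b -> xi a < xi b.
Proof.
move=> ab; rewrite (@xiE (Num.truncn b).+1 a) ?(@xiE (Num.truncn b).+1 b); first exact: g_lt.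
- exact: ltW (Num.Theory.truncnS_gt b).
- exact: ltW (lt_trans ab (Num.Theory.truncnS_gt b)).
Qed.

Lemma xi0 : xi 0 = 0.
Proof.
rewrite /xi.
have -> : Num.truncn (0 : R) = 0%N by apply/eqP; rewrite -leqn0 Num.Theory.truncn_le_nat.
by rewrite /g big_nat1 subr0 maxxx mulr0 addr0.
Qed.

Lemma xi_ge m : 0 <= m -> m <= xi m.
Proof. by move=> m0; rewrite /xi /g lerDl sum_ge0. Qed.

Lemma xi_ge0 m : 0 <= m -> 0 <= xi m.
Proof. move=> m0; exact: le_trans (xi_ge m0). Qed.

Lemma xi_gec m : 0 <= m -> (0 < Num.truncn m)%N -> c (Num.truncn m).-1 <= xi m.
Proof.
move=> m0 tp; rewrite /xi /g.
set n := Num.truncn m.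
have hn : n.-1.+1 = n by rewrite prednK.
rewrite big_nat_recr //= -hn big_nat_recr //= hn.
apply: le_trans (_ : c n.-1 * Num.max 0 (m - n.-1%:R) <= _).
  rewrite -[X in X <= _]mulr1 ler_wpM2l // le_max; apply/orP; right.
  rewrite lerBrDr addrC natr1 hn.
  by have := Num.Theory.truncn_itv m0; rewrite -/n => /andP[+ _].
have := sum_ge0 n.-1 m; have := mulr_ge0 (c0 n) (max0 (m - n%:R)); lra.
Qed.

Lemma xi_Kinf : Kinf xi.
Proof.
split; first exact: xi0.
split; first exact: continuous_subspaceT xi_cont.
split; first by move=> a b _; exact: xi_lt.
move=> M; exists (`|M| + 1); split; first by rewrite addr_ge0.
apply: lt_le_trans (xi_ge _); last by rewrite addr_ge0.
have := ler_norm M; lra.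
Qed.
End G.

Lemma Kinf_ge0 (R : realType) (f : R -> R) : Kinf f -> forall r, 0 <= r -> 0 <= f r.
Proof.
move=> [f0 [_ [finc _]]] r; rewrite le_eqVlt => /orP[/eqP <-|r0]; first by rewrite f0.
by rewrite -f0 ltW // finc.
Qed.

Lemma Kinf_add (R : realType) (f g : R -> R) : Kinf f -> Kinf g -> Kinf (fun r => f r + g r).
Proof.
move=> Kf Kg; have f0 := Kinf_ge0 Kf; have g0 := Kinf_ge0 Kg.
move: Kf Kg => [F0 [Fc [Fi Fu]]] [G0 [Gc [Gi Gu]]].
split; first by rewrite F0 G0 addr0.
split.
  move=> x; apply: continuousD; [exact: Fc|exact: Gc].
split; first by move=> a b a0 ab; rewrite ltrD // ?Fi ?Gi.
move=> M; have [r [r0 Mr]] := Fu M; exists r; split => //.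
have := g0 r r0; lra.
Qed.

Theorem lemma7 (R : realType) (X : normedModType R) (U : lmodType R)
  (Y : normedModType R) (S : CSys X U Y) :
  OUAG S -> BORS S -> OUGB S.
Proof.
move=> [gam [Kg HA]] HB.
have gam0 := Kinf_ge0 Kg.
have : forall n : nat, exists tau, inI (disc S) tau /\ forall x u t, `|x| < n.+1%:R ->
    Uin S u -> Unorm S u < n.+1%:R -> inI (disc S) t -> tau <= t ->
    `|yout S t x u| <= 1 + gam (Unorm S u).
  by move=> n; apply: HA.
case/choice => tau Htau.
have : forall n : nat, exists M : R, forall x u t, `|x| < n.+1%:R ->
    Uin S u -> Unorm S u < n.+1%:R -> inI (disc S) t -> t < tau n ->
    `|yout S t x u| <= M.
  by move=> n; apply: HB => //; exact: (Htau n).1.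
case/choice => M HM.
pose B (n : nat) : R := \sum_(0 <= k < n.+1) Num.max 0 (M k).
have B0 n : 0 <= B n by apply: sumr_ge0 => k _; exact: max0.
have BM n : M n <= B n.
  rewrite /B big_nat_recr //=; apply: le_trans (_ : Num.max 0 (M n) <= _).
    by rewrite le_max lexx orbT.
  by rewrite lerDr; apply: sumr_ge0 => k _; exact: max0.
have Bmono m n : (m <= n)%N -> B m <= B n.
  move=> mn; rewrite /B [X in _ <= X](big_cat_nat _ (n := m.+1)) //= ?ltnS //.
  by rewrite lerDl; apply: sumr_ge0 => k _; exact: max0.
pose cc k := B k.+1.
have cc0 k : 0 <= cc k by exact: B0.
have Bxi a : 0 <= a -> B (Num.truncn a) <= B 0 + xi cc a.
  move=> a0; case: (posnP (Num.truncn a)) => [->|tp].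
    by rewrite lerDl xi_ge0.
  have := xi_gec cc0 a0 tp; rewrite /cc prednK //.
  have := B0 0%N; lra.
exists (xi cc), (fun r => gam r + xi cc r), (1 + B 0%N).
split; first exact: xi_Kinf.
split; first exact: Kinf_add Kg (xi_Kinf cc0).
split; first by have := B0 0%N; lra.
move=> x u t Hu Ht.
have u0 := Unorm_ge0 Hu.
have x0 : 0 <= `|x| by [].
pose n := maxn (Num.truncn `|x|) (Num.truncn (Unorm S u)).
have Hx : `|x| < n.+1%:R.
  apply: lt_le_trans (Num.Theory.truncnS_gt _) _; rewrite ler_nat ltnS; exact: leq_maxl.
have HU : Unorm S u < n.+1%:R.
  apply: lt_le_trans (Num.Theory.truncnS_gt _) _; rewrite ler_nat ltnS; exact: leq_maxr.
have Hy : `|yout S t x u| <= 1 + gam (Unorm S u) + B n.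
  case: (leP (tau n) t) => tn.
    have := (Htau n).2 x u t Hx Hu HU Ht tn; have := B0 n; lra.
  have := HM n x u t Hx Hu HU Ht tn; have := BM n; have := gam0 _ u0; lra.
have HBn : B n <= B 0%N + xi cc `|x| + xi cc (Unorm S u).
  have := xi_ge0 cc0 x0; have := xi_ge0 cc0 u0.
  case: (leqP (Num.truncn `|x|) (Num.truncn (Unorm S u))) => h.
    have -> : n = Num.truncn (Unorm S u) by apply/maxn_idPr.
    have := Bxi _ u0; lra.
  have -> : n = Num.truncn `|x| by apply/maxn_idPl; exact: ltnW.
  have := Bxi _ x0; lra.
lra.
Qed.
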